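(* For all $k\ge1$ and $n\ge0$, $\gamma_k(n)=\frac1k\,b_k(n+1)$.
   Context: Let $G=\{g_1=e,\dots,g_k\}$ be a group of order $k$. A labeled graph on $G$ with $n$ edges has vertex set $G$ and $n$ directed edges labeled $1,\dots,n$, edge $i$ being an ordered pair of vertices (loops and multiple edges allowed); there are $k^{2n}$ such graphs. The degree of a vertex is the number of edges having it as initial or terminal point, a loop counted twice. A graph is balanced if every vertex has even degree; $b_k(n)$ is the number of balanced labeled graphs on $G$ with $n$ edges. A graph has an Eulerian pseudo-path from $e$ to $g_i$ if: all vertices other than $e,g_i$ have even degree; if $g_i=e$ then $\deg e$ is even; if $g_i\ne e$ then $\deg e$ and $\deg g_i$ are odd (no connectivity required). $\gamma_k(n)$ is the number of labeled graphs on $G$ with $n$ edges having an Eulerian pseudo-path from $e$ to some vertex $g_i$, $1\le i\le k$. *)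

(* Defs.v *)
From mathcomp Require Import all_boot all_fingroup.
Set Implicit Arguments. Unset Strict Implicit. Unset Printing Implicit Defensive.

(* A labeled graph on the finite group gT with n edges: edge i (i : 'I_n)
   is an ordered pair (initial, terminal) of vertices.  There are k^(2n). *)
Definition lgraph (gT : finGroupType) (n : nat) := {ffun 'I_n -> gT * gT}.

(* degree: number of edges having v as initial or terminal point,
   loops counted twice *)
Definition deg (gT : finGroupType) (n : nat) (G : lgraph gT n) (v : gT) : nat :=
  \sum_(i < n) (((G i).1 == v) + ((G i).2 == v)).

Definition balanced (gT : finGroupType) (n : nat) (G : lgraph gT n) : bool :=
  [forall v, ~~ odd (deg G v)].

(* Eulerian pseudo-path from the identity 1 to g (no connectivity). *)
Definition eul_pseudo_path (gT : finGroupType) (n : nat) (G : lgraph gT n) (g : gT) : bool :=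
  [forall v, (v != 1%g) && (v != g) ==> ~~ odd (deg G v)] &&
  (if g == 1%g then ~~ odd (deg G 1%g) else odd (deg G 1%g) && odd (deg G g)).

Definition bcount (gT : finGroupType) (n : nat) : nat :=
  #|[set G : lgraph gT n | balanced G]|.

Definition gammacount (gT : finGroupType) (n : nat) : nat :=
  #|[set G : lgraph gT n | [exists g : gT, eul_pseudo_path G g]]|.

(* Main.v *)
Require Import Defs.
From mathcomp Require Import all_boot all_fingroup.
Set Implicit Arguments. Unset Strict Implicit.


Section S.
Variable gT : finGroupType.
Local Open Scope group_scope.

Definition restr n (G : lgraph gT n.+1) : lgraph gT n :=
  [ffun i : 'I_n => G (widen_ord (leqnSn n) i)].
Definition ext n (G : lgraph gT n) (e : gT * gT) : lgraph gT n.+1 :=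
  [ffun i : 'I_n.+1 => if insub (val i) is Some j then G j else e].
Definition tr n (a : gT) (G : lgraph gT n) : lgraph gT n :=
  [ffun i => (a * (G i).1, a * (G i).2)].

Lemma deg_restr n (G : lgraph gT n.+1) v :
  deg G v = deg (restr G) v + ((G ord_max).1 == v) + ((G ord_max).2 == v).
Proof.
rewrite /deg big_ord_recr /= addnA; congr (_ + _ + _).
by apply: eq_bigr => i _; rewrite /restr ffunE.
Qed.

Lemma restr_ext n (G : lgraph gT n) e : restr (ext G e) = G.
Proof.
apply/ffunP => i; rewrite !ffunE /=.
by rewrite insubT //= => ?; congr (G _); apply: val_inj.
Qed.

Lemma ext_max n (G : lgraph gT n) e : ext G e ord_max = e.
Proof. by rewrite ffunE insubN //= ltnn. Qed.

Lemma eqmul (a x v : gT) : (a * x == v) = (x == a^-1 * v).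
Proof. by rewrite -(inj_eq (mulgI a^-1)) mulKg. Qed.

Lemma deg_tr n a (G : lgraph gT n) v : deg (tr a G) v = deg G (a^-1 * v).
Proof. by apply: eq_bigr => i _; rewrite ffunE /= !eqmul. Qed.

Lemma bal_tr n a (G : lgraph gT n) : balanced (tr a G) = balanced G.
Proof.
apply/forallP/forallP => H v.
  by have := H (a * v); rewrite deg_tr mulKg.
by rewrite deg_tr.
Qed.

Lemma trK n a : cancel (@tr n a) (@tr n a^-1).
Proof. by move=> G; apply/ffunP => i; rewrite !ffunE /= !mulKg; case: (G i). Qed.

Lemma odd_eq (b c : bool) : odd (b + c) = b (+) c.
Proof. by case: b; case: c. Qed.

Lemma bal_char n (G : lgraph gT n.+1) :
  balanced G = [forall v, odd (deg (restr G) v) == ((G ord_max).1 == v) (+) ((G ord_max).2 == v)].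
Proof.
apply: eq_forallb => v; rewrite deg_restr -addnA oddD odd_eq.
by case: odd; case: (_ == v); case: (_ == v).
Qed.

Lemma gamma_eq n :
  gammacount gT n = #|[set G : lgraph gT n.+1 | balanced G && ((G ord_max).1 == 1)]|.
Proof.
rewrite /gammacount -(card_in_imset (f := @restr n)).
  apply: eq_card => G; rewrite inE; apply/existsP/imsetP.
  - case=> g /andP [/forallP Hv Hg]; exists (ext G (1, g)); last by rewrite restr_ext.
    rewrite inE bal_char ext_max eqxx andbT restr_ext; apply/forallP => v /=.
    have := Hv v; case: (eqVneq v 1) => [->|v1]; case: (eqVneq g 1) => [g1|g1] /=.
    + by move=> _; move: Hg; rewrite g1 eqxx => /negbTE ->.
    + by move=> _; move: Hg; rewrite (negbTE g1) => /andP [-> _].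
    + by rewrite g1 (eq_sym 1 v) (negbTE v1) => /implyP/(_ isT)/negbTE ->.
    + case: (eqVneq g v) => [<-|gv] _.
        by move: Hg; rewrite (negbTE g1) => /andP [_ ->].
      by move: (Hv v); rewrite v1 (eq_sym v g) gv => /negbTE ->.
  - case=> G' ; rewrite inE => /andP [HB /eqP H1] ->; exists (G' ord_max).2.
    move: HB; rewrite bal_char H1 => /forallP HB; apply/andP; split.
      apply/forallP => v; apply/implyP => /andP [v1 vg].
      by move: (HB v) => /eqP ->; rewrite eq_sym (negbTE v1) eq_sym (negbTE vg).
    case: ifP => [/eqP g1|g1].
      by move: (HB 1) => /eqP ->; rewrite g1 eqxx.
    move: (HB 1) (HB (G' ord_max).2) => /eqP -> /eqP ->.
    by rewrite !eqxx g1 eq_sym g1.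
move=> G1 G2; rewrite !inE => /andP [B1 /eqP E1] /andP [B2 /eqP E2] Er.
move: B1 B2; rewrite !bal_char Er E1 E2 => /forallP H1 /forallP H2.
have Ex : (G1 ord_max).2 = (G2 ord_max).2.
  move: (H1 (G1 ord_max).2) (H2 (G1 ord_max).2) => /eqP -> /eqP.
  by rewrite eqxx; case: (_ == _) => //=; case: eqP.
apply/ffunP => i; have [j ->|] := unliftP ord_max i.
  have := congr1 (fun f : lgraph gT n => f j) Er; rewrite /= !ffunE.
  suff -> : widen_ord (leqnSn n) j = lift ord_max j by [].
  by apply: val_inj; rewrite /= /bump leqNgt ltn_ord.
by move=> ->; case: (G1 ord_max) E1 Ex => ? ?; case: (G2 ord_max) E2 => ? ? /= -> -> ->.
Qed.

End S.

Theorem mainTheorem12 (gT : finGroupType) (n : nat) :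
  #|gT| * gammacount gT n = bcount gT n.+1.
Proof.
rewrite /bcount -sum1_card (partition_big (fun G : lgraph gT n.+1 => (G ord_max).1) predT) //=.
rewrite (eq_bigr (fun _ => gammacount gT n)) ?sum_nat_const; first by [].
move=> a _; rewrite gamma_eq sum1dep_card.
rewrite -(card_imset _ (can_inj (@trK gT n.+1 a^-1))).
apply: eq_card => G; rewrite !inE; apply/imsetP/andP.
  case=> x; rewrite !inE => /andP [HB /eqP Ha] ->; split; first by rewrite bal_tr.
  by rewrite ffunE /= Ha mulVg.
case=> HB /eqP H1; exists (tr a G); last by rewrite trK.
by rewrite !inE bal_tr HB /= ffunE /= H1 mulg1.
Qed.
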